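(* Let $d\ge 1$, let $\epsilon>0$ and let $\eta$ be a positive integer. Let $S_{\text{prototype}}$ and $S_{\text{inc}}$ be disjoint finite subsets of $\mathbb{R}^d$, and put $Q' = S_{\text{prototype}}\cup S_{\text{inc}}$. Let $c_1$ be a cluster of $S_{\text{prototype}}$ (in the sense defined in the context, computed within $S_{\text{prototype}}$), and let $u\in c_1$. Let $v\in S_{\text{inc}}$ be such that $u$ and $v$ are both core points of $Q'$ and $\mathrm{dist}(u,v)\le\epsilon$ (so $u$ and $v$ are directly density-reachable from each other in $Q'$). Then: (i) for every $w\in c_1$ there is a path in $G(Q')$ from $w$ to $v$ consisting only of active edges of $G(Q')$; and (ii) for every $z\in S_{\text{inc}}$ that is density-reachable from $v$ in $Q'$, or from which $v$ is density-reachable in $Q'$, the point $z$ is density-connected to $u$ in $Q'$ and $z$ belongs to the same cluster of $Q'$ as $u$ (and hence as every point of $c_1$).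
   Context: Distances are Euclidean. For a finite set $Q\subset\mathbb{R}^d$ and $x\in Q$, the $\epsilon$-neighborhood of $x$ in $Q$ is $N_\epsilon^Q(x)=\{y\in Q:\mathrm{dist}(x,y)\le\epsilon\}$. The point $x$ is a core point of $Q$ if $|N_\epsilon^Q(x)|\ge\eta$. A point $p$ is directly density-reachable from $q$ in $Q$ if $p\in N_\epsilon^Q(q)$ and $q$ is a core point of $Q$. A point $p$ is density-reachable from $q$ in $Q$ if there is a sequence $p_1=p,\dots,p_m=q$ in $Q$ such that consecutive points are linked by direct density-reachability (each link going out from a core point). The graph $G(Q)$ has vertex set $Q$ and an edge $\{x,y\}$ for distinct $x,y\in Q$ with $\mathrm{dist}(x,y)\le\epsilon$; an edge is called active if at least one of its endpoints is a core point of $Q$ (edges with both endpoints core are ''volatile-yes'', with exactly one core endpoint ''volatile-weak''). A cluster of $Q$ is a maximal set of vertices of $G(Q)$ that are pairwise connected by paths of active edges (i.e. a connected component, containing a core point, of the subgraph of active edges); two points are density-connected when they lie in such a common connected set. The same threshold $\eta$ and radius $\epsilon$ are used for $S_{\text{prototype}}$ and for $Q'$. *)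

(* Defs.v *)
From HB Require Import structures.
From mathcomp Require Import all_boot all_order all_algebra.
From mathcomp Require Import finmap.
From mathcomp Require Import reals.
Set Implicit Arguments. Unset Strict Implicit. Unset Printing Implicit Defensive.
Import Order.TTheory GRing.Theory Num.Theory.
Local Open Scope ring_scope.
Local Open Scope fset_scope.

Section DBSCAN.
Variables (R : realType) (d : nat).
Notation pt := 'rV[R]_d.

Definition dist (x y : pt) : R := Num.sqrt (\sum_(i < d) (x 0 i - y 0 i) ^+ 2).

Variables (eps : R) (eta : nat).

Definition nbhd (Q : {fset pt}) (x : pt) : {fset pt} := [fset y in Q | dist x y <= eps].

Definition core (Q : {fset pt}) (x : pt) : bool := (x \in Q) && (eta <= #|` nbhd Q x|)%N.

Definition ddr (Q : {fset pt}) (p q : pt) : bool := [&& p \in Q, p \in nbhd Q q & core Q q].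

Definition dr (Q : {fset pt}) (p q : pt) : Prop :=
  p \in Q /\ exists s : seq pt, path (ddr Q) p s /\ last p s = q.

Definition edge (Q : {fset pt}) (x y : pt) : bool :=
  [&& x \in Q, y \in Q, x != y & dist x y <= eps].

Definition active_edge (Q : {fset pt}) (x y : pt) : bool :=
  edge Q x y && (core Q x || core Q y).

Definition active_path (Q : {fset pt}) (x y : pt) : Prop :=
  exists s : seq pt, path (active_edge Q) x s /\ last x s = y.

(* C is a cluster of Q: a connected component of the active-edge subgraph of
   G(Q) that contains a core point *)
Definition is_cluster (Q : {fset pt}) (C : {fset pt}) : Prop :=
  [/\ C `<=` Q,
      exists2 x, x \in C & core Q x &
      forall x, x \in C -> forall y, y \in Q -> (y \in C <-> active_path Q x y)].

Definition density_connected (Q : {fset pt}) (x y : pt) : Prop :=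
  exists C, [/\ is_cluster Q C, x \in C & y \in C].

End DBSCAN.

(* Main.v *)
Require Import Defs.
From HB Require Import structures.
From mathcomp Require Import all_boot all_order all_algebra.
From mathcomp Require Import finmap.
From mathcomp Require Import reals.
From Stdlib Require Import ClassicalDescription.
Set Implicit Arguments. Unset Strict Implicit.
Import Order.TTheory GRing.Theory Num.Theory.
Local Open Scope ring_scope.
Local Open Scope fset_scope.

Lemma dist_sym (R : realType) (d : nat) (x y : 'rV[R]_d) : dist x y = dist y x.
Proof. rewrite /dist; congr Num.sqrt; apply: eq_bigr => i _; by rewrite -sqrrN opprB. Qed.

Lemma edge_sym (R : realType) (d : nat) (eps : R) (Q : {fset 'rV[R]_d}) x y :
  edge eps Q x y = edge eps Q y x.
Proof. rewrite /edge dist_sym eq_sym; by case: (x \in Q); case: (y \in Q). Qed.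

Lemma ae_sym (R : realType) (d : nat) (eps : R) eta (Q : {fset 'rV[R]_d}) x y :
  active_edge eps eta Q x y = active_edge eps eta Q y x.
Proof. by rewrite /active_edge edge_sym orbC. Qed.

Lemma ap_refl (R : realType) (d : nat) (eps : R) eta (Q : {fset 'rV[R]_d}) x :
  active_path eps eta Q x x.
Proof. by exists [::]. Qed.

Lemma ap_trans (R : realType) (d : nat) (eps : R) eta (Q : {fset 'rV[R]_d}) x y z :
  active_path eps eta Q x y -> active_path eps eta Q y z -> active_path eps eta Q x z.
Proof.
move=> [s1 [p1 l1]] [s2 [p2 l2]]; exists (s1 ++ s2).
by rewrite cat_path last_cat p1 l1 p2 l2.
Qed.

Lemma ap_edge (R : realType) (d : nat) (eps : R) eta (Q : {fset 'rV[R]_d}) x y :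
  active_edge eps eta Q x y -> active_path eps eta Q x y.
Proof. by move=> h; exists [:: y]; rewrite /= h. Qed.

Lemma ap_sym (R : realType) (d : nat) (eps : R) eta (Q : {fset 'rV[R]_d}) x y :
  active_path eps eta Q x y -> active_path eps eta Q y x.
Proof.
move=> [s [p l]]; elim: s x p l => [|q s IH] x /=; first by move=> _ ->; exact: ap_refl.
move=> /andP[e p] l; apply: ap_trans (IH q p l) _; apply: ap_edge; by rewrite ae_sym.
Qed.

Lemma ddr_ap (R : realType) (d : nat) (eps : R) eta (Q : {fset 'rV[R]_d}) p s :
  path (ddr eps eta Q) p s -> active_path eps eta Q p (last p s).
Proof.
elim: s p => [|q s IH] p /=; first by move=> _; exact: ap_refl.
move=> /andP[h ps]; have := IH q ps; case: (eqVneq p q) => [->//|npq].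
apply: ap_trans; apply: ap_edge.
move: h; rewrite /ddr /active_edge /edge => /and3P[pQ].
rewrite /nbhd !inE /= => /andP[_ dqp] cq.
have qQ : q \in Q by move: cq; rewrite /core => /andP[].
by rewrite /active_edge /edge pQ qQ npq dist_sym dqp cq orbT.
Qed.

Lemma nbhd_sub (R : realType) (d : nat) (eps : R) (Q Q' : {fset 'rV[R]_d}) x :
  Q `<=` Q' -> nbhd eps Q x `<=` nbhd eps Q' x.
Proof.
move=> /fsubsetP sQ; apply/fsubsetP => y; rewrite /nbhd !inE /= => /andP[yQ ->].
by rewrite sQ.
Qed.

Lemma core_sub (R : realType) (d : nat) (eps : R) eta (Q Q' : {fset 'rV[R]_d}) x :
  Q `<=` Q' -> core eps eta Q x -> core eps eta Q' x.
Proof.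
move=> sQ /andP[xQ c]; apply/andP; split; first by move/fsubsetP: sQ; apply.
apply: leq_trans c _; apply: fsubset_leq_card; exact: nbhd_sub.
Qed.

Lemma ap_sub (R : realType) (d : nat) (eps : R) eta (Q Q' : {fset 'rV[R]_d}) x y :
  Q `<=` Q' -> active_path eps eta Q x y -> active_path eps eta Q' x y.
Proof.
move=> sQ [s [p l]]; exists s; split=> //; apply: sub_path p => a b.
rewrite /active_edge /edge => /andP[/and4P[aQ bQ -> ->] c].
move/fsubsetP: (sQ) => sQ'.
rewrite (sQ' _ aQ) (sQ' _ bQ) /=.
by case/orP: c => c; rewrite (@core_sub _ _ eps eta Q Q' _ sQ c) ?orbT.
Qed.

Lemma cluster_ex (R : realType) (d : nat) (eps : R) eta (Q : {fset 'rV[R]_d}) u :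
  core eps eta Q u -> exists C, [/\ is_cluster eps eta Q C, u \in C &
     forall y, y \in C <-> (y \in Q /\ active_path eps eta Q u y)].
Proof.
move=> cu; have uQ : u \in Q by case/andP: cu.
pose C := [fset y in Q | is_left (excluded_middle_informative (active_path eps eta Q u y))].
have memC y : y \in C <-> (y \in Q /\ active_path eps eta Q u y).
  rewrite /C !inE /=; case: excluded_middle_informative => /= h.
    by rewrite andbT; split=> [->|[]].
  by rewrite andbF; split=> // -[].
have uC : u \in C by apply/memC; split=> //; exact: ap_refl.
exists C; split=> //; split.
- by apply/fsubsetP => y /memC [].
- by exists u.
move=> x /memC [xQ ux] y yQ; split.
  by move=> /memC [_ uy]; apply: ap_trans (ap_sym ux) uy.
by move=> xy; apply/memC; split=> //; apply: ap_trans ux xy.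
Qed.

Theorem lemma4p2 (R : realType) (d : nat) (eps : R) (eta : nat)
  (Sproto Sinc : {fset 'rV[R]_d}) (c1 : {fset 'rV[R]_d}) (u v : 'rV[R]_d) :
  (0 < d)%N -> 0 < eps -> (0 < eta)%N ->
  [disjoint Sproto & Sinc] ->
  is_cluster eps eta Sproto c1 -> u \in c1 ->
  v \in Sinc ->
  core eps eta (Sproto `|` Sinc) u -> core eps eta (Sproto `|` Sinc) v ->
  dist u v <= eps ->
  (forall w, w \in c1 -> active_path eps eta (Sproto `|` Sinc) w v) /\
  (forall z, z \in Sinc ->
     (dr eps eta (Sproto `|` Sinc) z v \/ dr eps eta (Sproto `|` Sinc) v z) ->
     density_connected eps eta (Sproto `|` Sinc) z u /\
     (forall C, is_cluster eps eta (Sproto `|` Sinc) C -> u \in C ->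
        z \in C /\ {subset c1 <= C})).
Proof.
move=> _ _ _ dis [c1S _ c1H] uc1 vI cu cv duv.
set Q := Sproto `|` Sinc.
have sQ : Sproto `<=` Q by apply: fsubsetUl.
have uS : u \in Sproto by move/fsubsetP: c1S; apply.
have uv : active_path eps eta Q u v.
  apply: ap_edge; rewrite /active_edge /edge cu /= andbT.
  have vQ : v \in Q by rewrite /Q inE vI orbT.
  have uQ : u \in Q by case/andP: cu.
  rewrite uQ vQ duv andbT /=.
  apply/eqP => e; move: vI; rewrite -e => uI.
  by move/fdisjointP: dis => /(_ u uS); rewrite uI.
have partI : forall w, w \in c1 -> active_path eps eta Q w v.
  move=> w wc; apply: ap_trans uv.
  have wS : w \in Sproto by move/fsubsetP: c1S; apply.
  apply: ap_sub sQ _; exact: (proj1 (c1H w wc u uS) uc1).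
split=> // z zI hz.
have zQ : z \in Q by rewrite /Q inE zI orbT.
have vz : active_path eps eta Q v z.
  case: hz => [[_ [s [p l]]]|[_ [s [p l]]]].
    by apply: ap_sym; rewrite -l; apply: ddr_ap.
  by rewrite -l; apply: ddr_ap.
have uz := ap_trans uv vz.
have inC : forall C, is_cluster eps eta Q C -> u \in C -> z \in C /\ {subset c1 <= C}.
  move=> C [CQ _ CH] uC; split; first by apply/(CH u uC z zQ).
  move=> w wc; have wQ : w \in Q by move/fsubsetP: sQ; apply; move/fsubsetP: c1S; apply.
  by apply/(CH u uC w wQ); apply: ap_trans uv (ap_sym (partI w wc)).
split=> //.
have [C [Ccl uC _]] := cluster_ex cu.
by exists C; split=> //; case: (inC C Ccl uC).
Qed.
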